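(* Let $G_0$ be a locally compact totally disconnected group, and let $C,D\subset G_0$ be closed subgroups, each isomorphic (as topological groups) to $F^m$ for some $m$, in duality via a non-degenerate $F$-bilinear pairing $\langle\cdot,\cdot\rangle':C\times D\to F$. Let $\chi$ be a continuous character of $D$, and let $f$ be a function on $G_0$ right-invariant under some open compact subgroup such that $f(cd)=f(c)\chi(d)\psi(\langle c,d\rangle')$ for all $c\in C$, $d\in D$. Then $f|_C$ is compactly supported. Moreover, if $f$ is right-invariant under a fixed open compact subgroup $K_0$ and $\langle\cdot,\cdot\rangle'$ ranges over a compact set $\tilde\Omega$ of non-degenerate pairings, then the support of $f|_C$ is contained in a compact set depending only on $K_0$, $\tilde\Omega$ and the conductor of $\chi$.
   Context: $F$ is a $p$-adic field and $\psi$ a nontrivial continuous additive character of $F$. *)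

(* Defs.v *)
From Stdlib Require Import Rdefinitions List.
From HB Require Import structures.
From mathcomp Require Import all_boot all_order all_algebra.
Set Implicit Arguments. Unset Strict Implicit. Unset Printing Implicit Defensive.
Import Order.TTheory GRing.Theory Num.Theory.
Local Open Scope ring_scope.

Definition is_topology {T : Type} (op : (T -> Prop) -> Prop) : Prop :=
  op (fun _ => True) /\
  (forall (I : Type) (U : I -> T -> Prop),
      (forall i, op (U i)) -> op (fun x => exists i, U i x)) /\
  (forall U V, op U -> op V -> op (fun x => U x /\ V x)).

Definition is_compact {T : Type} (op : (T -> Prop) -> Prop) (K : T -> Prop) : Prop :=
  forall (I : Type) (U : I -> T -> Prop),
    (forall i, op (U i)) -> (forall x, K x -> exists i, U i x) ->
    exists l : list I, forall x, K x -> exists i, List.In i l /\ U i x.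

Definition is_closed {T : Type} (op : (T -> Prop) -> Prop) (A : T -> Prop) : Prop :=
  op (fun x => ~ A x).

Definition continuous_on {T S : Type} (opT : (T -> Prop) -> Prop) (A : T -> Prop)
  (opS : (S -> Prop) -> Prop) (g : T -> S) : Prop :=
  forall V, opS V -> exists U, opT U /\ forall x, A x -> (U x <-> V (g x)).

Definition is_connected {T : Type} (op : (T -> Prop) -> Prop) (S : T -> Prop) : Prop :=
  ~ (exists U V, op U /\ op V /\
       (forall x, S x -> U x \/ V x) /\
       (exists x, S x /\ U x) /\ (exists x, S x /\ V x) /\
       (forall x, S x -> U x -> V x -> False)).

Definition totally_disconnected {T : Type} (op : (T -> Prop) -> Prop) : Prop :=
  forall S, is_connected op S -> forall x y, S x -> S y -> x = y.

Definition hausdorff {T : Type} (op : (T -> Prop) -> Prop) : Prop :=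
  forall x y : T, x <> y -> exists U V, op U /\ op V /\ U x /\ V y /\
    (forall z, U z -> V z -> False).

Definition locally_compact {T : Type} (op : (T -> Prop) -> Prop) : Prop :=
  forall x : T, exists U K, op U /\ U x /\ (forall y, U y -> K y) /\ is_compact op K.

Record tdlcGroup := TdlcGroup {
  tg_sort :> Type;
  tg_mul : tg_sort -> tg_sort -> tg_sort;
  tg_inv : tg_sort -> tg_sort;
  tg_one : tg_sort;
  tg_open : (tg_sort -> Prop) -> Prop;
  tg_mulA : forall x y z, tg_mul x (tg_mul y z) = tg_mul (tg_mul x y) z;
  tg_mul1g : forall x, tg_mul tg_one x = x;
  tg_mulVg : forall x, tg_mul (tg_inv x) x = tg_one;
  tg_topology : is_topology tg_open;
  tg_mul_cont : forall x y V, tg_open V -> V (tg_mul x y) ->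
     exists U1 U2, tg_open U1 /\ tg_open U2 /\ U1 x /\ U2 y /\
       (forall a b, U1 a -> U2 b -> V (tg_mul a b));
  tg_inv_cont : forall V, tg_open V -> tg_open (fun x => V (tg_inv x));
  tg_hausdorff : hausdorff tg_open;
  tg_locally_compact : locally_compact tg_open;
  tg_totally_disconnected : totally_disconnected tg_open
}.

Definition subgroup (G : tdlcGroup) (H : G -> Prop) : Prop :=
  H (tg_one G) /\ (forall x y, H x -> H y -> H (tg_mul x y)) /\
  (forall x, H x -> H (tg_inv x)).

Definition closed_subgroup (G : tdlcGroup) (H : G -> Prop) : Prop :=
  subgroup H /\ is_closed (@tg_open G) H.

Definition open_compact_subgroup (G : tdlcGroup) (K : G -> Prop) : Prop :=
  subgroup K /\ tg_open K /\ is_compact (@tg_open G) K.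

Definition right_invariant (G : tdlcGroup) {V : Type} (K : G -> Prop) (f : G -> V) : Prop :=
  forall g k, K k -> f (tg_mul g k) = f g.

(* x lies in P^k, i.e. x = 0 or v(x) >= k. *)
Definition vge {T : zmodType} (val : T -> int) (k : int) (x : T) : bool :=
  (x == 0) || (k <= val x).

Record padicField := PadicField {
  pf_sort :> fieldType;
  pf_val : pf_sort -> int;           (* normalized valuation on F^x *)
  pf_unif : pf_sort;
  pf_char0 : [pchar pf_sort] =i pred0;
  pf_valM : forall x y : pf_sort, x != 0 -> y != 0 ->
     pf_val (x * y) = pf_val x + pf_val y;
  pf_valD : forall x y : pf_sort, x != 0 -> y != 0 -> x + y != 0 ->
     Num.min (pf_val x) (pf_val y) <= pf_val (x + y);
  pf_unifP : pf_unif != 0 /\ pf_val pf_unif = 1;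
  pf_complete : forall u : nat -> pf_sort,
     (forall k, exists N, forall i j, (N <= i)%N -> (N <= j)%N ->
         vge pf_val k (u i - u j)) ->
     exists l, forall k, exists N, forall i, (N <= i)%N -> vge pf_val k (u i - l);
  pf_residue_finite : exists s : seq pf_sort,
     (forall r, r \in s -> vge pf_val 0 r) /\
     (forall x, vge pf_val 0 x -> exists2 r, r \in s & vge pf_val 1 (x - r))
}.

Definition F_open (F : padicField) (U : F -> Prop) : Prop :=
  forall x, U x -> exists k, forall y, vge (@pf_val F) k (y - x) -> U y.

Definition mx_open (F : padicField) (a b : nat) (U : 'M[F]_(a, b) -> Prop) : Prop :=
  forall x, U x -> exists k, forall y : 'M[F]_(a, b),
      (forall i j, vge (@pf_val F) k (y i j - x i j)) -> U y.

Definition lattice_k (F : padicField) (n : nat) (k : int) (y : 'rV[F]_n) : Prop :=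
  forall i, vge (@pf_val F) k (y 0 i).

Definition Cx : Type := (R * R)%type.
Definition Czero : Cx := (R0, R0).
Definition Cone : Cx := (R1, R0).
Definition Cmul (z w : Cx) : Cx :=
  (Rminus (Rmult (fst z) (fst w)) (Rmult (snd z) (snd w)),
   Rplus (Rmult (fst z) (snd w)) (Rmult (snd z) (fst w))).
Definition Cx_open (U : Cx -> Prop) : Prop :=
  forall z, U z -> exists eps, Rlt R0 eps /\ forall w,
    Rlt (Rplus (Rmult (Rminus (fst w) (fst z)) (Rminus (fst w) (fst z)))
              (Rmult (Rminus (snd w) (snd z)) (Rminus (snd w) (snd z)))) eps ->
    U w.

Definition additive_character (F : padicField) (psi : F -> Cx) : Prop :=
  (forall x y, psi (x + y) = Cmul (psi x) (psi y)) /\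
  (forall x, psi x <> Czero) /\
  continuous_on (@F_open F) (fun _ => True) Cx_open psi.

Definition continuous_character (G : tdlcGroup) (D : G -> Prop) (chi : G -> Cx) : Prop :=
  (forall x y, D x -> D y -> chi (tg_mul x y) = Cmul (chi x) (chi y)) /\
  (forall x, D x -> chi x <> Czero) /\
  continuous_on (@tg_open G) D Cx_open chi.

Definition topgroup_iso_onto (F : padicField) (G : tdlcGroup) (m : nat)
  (phi : 'rV[F]_m -> G) (H : G -> Prop) : Prop :=
  (forall x y, phi (x + y) = tg_mul (phi x) (phi y)) /\
  injective phi /\
  (forall g, H g <-> exists x, g = phi x) /\
  continuous_on (@mx_open F 1 m) (fun _ => True) (@tg_open G) phi /\
  (forall U, mx_open U -> exists V, tg_open V /\ forall x, U x <-> V (phi x)).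

Definition pairing (F : padicField) (m n : nat) (A : 'M[F]_(m, n))
  (x : 'rV[F]_m) (y : 'rV[F]_n) : F := (x *m A *m y^T) 0 0.

Definition nondegenerate_pairing (F : padicField) (m n : nat) (A : 'M[F]_(m, n)) : Prop :=
  (forall x, (forall y, pairing A x y = 0) -> x = 0) /\
  (forall y, (forall x, pairing A x y = 0) -> y = 0).

Definition conductor_le (F : padicField) (G : tdlcGroup) (n : nat)
  (phiD : 'rV[F]_n -> G) (chi : G -> Cx) (k : int) : Prop :=
  forall y, lattice_k k y -> chi (phiD y) = Cone.

Definition equivariant (F : padicField) (G : tdlcGroup) (m n : nat)
  (phiC : 'rV[F]_m -> G) (phiD : 'rV[F]_n -> G) (A : 'M[F]_(m, n))
  (psi : F -> Cx) (chi : G -> Cx) (f : G -> Cx) : Prop :=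
  forall x y, f (tg_mul (phiC x) (phiD y)) =
              Cmul (Cmul (f (phiC x)) (chi (phiD y))) (psi (pairing A x y)).

(* Main.v *)
Require Import Defs.
From Stdlib Require Import Rdefinitions.
From HB Require Import structures.
From mathcomp Require Import all_boot all_order all_algebra.
From mathcomp Require Import zify.
From Stdlib Require Import Reals Lra Classical ClassicalEpsilon.
Set Implicit Arguments. Unset Strict Implicit. Unset Printing Implicit Defensive.
Import Order.TTheory GRing.Theory Num.Theory.
Open Scope ring_scope.

Section V.
Variable F : padicField.
Local Notation val := (@pf_val F).
Local Notation vg := (vge (@pf_val F)).

Lemma val1 : val 1 = 0.
Proof. have := @pf_valM F 1 1 (oner_neq0 _) (oner_neq0 _). rewrite mulr1. lia. Qed.

Lemma valN1 : val (-1) = 0.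
Proof. have h : (-1 : F) != 0 by rewrite oppr_eq0 oner_neq0.
have := @pf_valM F (-1) (-1) h h. rewrite mulrNN mulr1 val1. lia. Qed.

Lemma valN x : x != 0 -> val (- x) = val x.
Proof. move=> hx. have h : (-1 : F) != 0 by rewrite oppr_eq0 oner_neq0.
rewrite -mulN1r pf_valM // valN1 add0r //. Qed.

Lemma valV x : x != 0 -> val x^-1 = - val x.
Proof. move=> hx. have := @pf_valM F x x^-1 hx (invr_neq0 hx). rewrite mulfV // val1. lia. Qed.

Lemma vge0 k : vg k 0.
Proof. by rewrite /vge eqxx. Qed.

Lemma vgeN k x : vg k x -> vg k (- x).
Proof. rewrite /vge oppr_eq0. case/orP=> [->//|h]. case: (x =P 0) => [->//|/eqP hx].
by rewrite valN // h orbT. Qed.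

Lemma vgeD k x y : vg k x -> vg k y -> vg k (x + y).
Proof. rewrite /vge. case: (x =P 0) => [->|/eqP hx] /=; first by rewrite add0r.
idtac.
case: (y =P 0) => [-> h _|/eqP hy].
  by rewrite addr0; case: (x =P 0) h.

move=> h1 h2; rewrite /= in h1 h2.
case: (x + y =P 0) => [//|/eqP hxy] /=. apply: le_trans (pf_valD hx hy hxy).
by rewrite le_min h1 h2. Qed.

Lemma vgeB k x y : vg k x -> vg k y -> vg k (x - y).
Proof. by move=> h1 h2; apply: vgeD => //; apply: vgeN. Qed.

Lemma vgeM k l x y : vg k x -> vg l y -> vg (k + l) (x * y).
Proof. rewrite /vge. case: (x =P 0) => [->|/eqP hx] /=; first by rewrite mul0r eqxx.
case: (y =P 0) => [->|/eqP hy] /=; first by rewrite mulr0 eqxx.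
move=> h1 h2;  rewrite mulf_eq0 (negbTE hx) (negbTE hy) /= pf_valM //. by apply: lerD. Qed.

Lemma vge_mono k l x : l <= k -> vg k x -> vg l x.
Proof. rewrite /vge => hlk /orP [->//|h]. by rewrite (le_trans hlk h) orbT. Qed.

Lemma vge_val x : vg (val x) x.
Proof. by rewrite /vge lexx orbT. Qed.

Lemma vge_sum (J : Type) (r : seq J) (P : pred J) (G : J -> F) k :
  (forall i, P i -> vg k (G i)) -> vg k (\sum_(i <- r | P i) G i).
Proof. move=> h. apply: (big_ind (vg k)) => //; [exact: vge0|exact: vgeD]. Qed.

Lemma exists_val (e : int) : exists z : F, z != 0 /\ val z = e.
Proof.
have [hu hv] := @pf_unifP F.
have hn : forall n : nat, val (pf_unif F ^+ n) = n.
  elim=> [|n IH]; first by rewrite expr0 val1.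
  by rewrite exprS pf_valM ?expf_neq0 // IH hv; lia.
case: e => n.
  by exists (pf_unif F ^+ n); rewrite expf_neq0 // hn.
exists ((pf_unif F ^+ n.+1)^-1). rewrite invr_neq0 ?expf_neq0 // valV ?expf_neq0 // hn.
by rewrite NegzE.
Qed.

Lemma val_div x z : x != 0 -> z != 0 -> val (x / z) = val x - val z.
Proof. move=> hx hz. rewrite pf_valM ?invr_neq0 // valV //. Qed.

End V.

Definition Lat (F : padicField) a b (k : int) (M : 'M[F]_(a, b)) : Prop :=
  forall i j, vge (@pf_val F) k (M i j).

Lemma fin_bound (I : finType) (P : nat -> I -> Prop) :
  (forall i, exists N, P N i) -> (forall (N N' : nat) i, leq N N' -> P N i -> P N' i) ->
  exists N, forall i, P N i.
Proof.
move=> h hm. suff: forall s : seq I, exists N, forall i, i \in s -> P N i.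
  by case/(_ (enum I)) => N hN; exists N => i; apply: hN; rewrite mem_enum.
elim=> [|x s [N hN]]; first by exists 0%N.
have [N' hN'] := h x. exists (maxn N N') => i; rewrite in_cons => /orP [/eqP->|hi].
  by apply: hm hN'; apply: leq_maxr.
by apply: hm (hN _ hi); apply: leq_maxl.
Qed.

Section L.
Variable F : padicField.
Local Notation val := (@pf_val F).
Local Notation vg := (vge (@pf_val F)).

Lemma Lat_exists a b (M : 'M[F]_(a, b)) : exists k, Lat k M.
Proof.
have [N hN] : exists N, forall ij : ('I_a * 'I_b)%type, vg (- (N%:Z)) (M ij.1 ij.2).
  apply: fin_bound.
- move=> ij; exists (absz (val (M ij.1 ij.2))).
  apply: (vge_mono (k := val (M ij.1 ij.2))); last exact: vge_val. lia.
- move=> N N' ij hle; apply: vge_mono. lia.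
- by exists (- (N%:Z)) => i j; apply: (hN (i, j)).
Qed.

Lemma Lat0 a b k : Lat k (0 : 'M[F]_(a, b)).
Proof. by move=> i j; rewrite mxE; apply: vge0. Qed.
Lemma LatD a b k (M N : 'M[F]_(a, b)) : Lat k M -> Lat k N -> Lat k (M + N).
Proof. by move=> h1 h2 i j; rewrite mxE; apply: vgeD. Qed.
Lemma LatN a b k (M : 'M[F]_(a, b)) : Lat k M -> Lat k (- M).
Proof. by move=> h1 i j; rewrite mxE; apply: vgeN. Qed.
Lemma LatB a b k (M N : 'M[F]_(a, b)) : Lat k M -> Lat k N -> Lat k (M - N).
Proof. by move=> h1 h2; apply: LatD => //; apply: LatN. Qed.
Lemma Lat_mono a b k l (M : 'M[F]_(a, b)) : l <= k -> Lat k M -> Lat l M.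
Proof. by move=> hl h i j; apply: vge_mono (h i j). Qed.
Lemma LatM a b c k l (M : 'M[F]_(a, b)) (N : 'M[F]_(b, c)) :
  Lat k M -> Lat l N -> Lat (k + l) (M *m N).
Proof. move=> h1 h2 i j; rewrite mxE; apply: vge_sum => x _; exact: vgeM. Qed.
End L.

Section CX.
Local Open Scope R_scope.
Lemma Cmul_comm z w : Cmul z w = Cmul w z.
Proof. destruct z, w; unfold Cmul; simpl; f_equal; ring. Qed.
Lemma Cmul_assoc z w u : Cmul z (Cmul w u) = Cmul (Cmul z w) u.
Proof. destruct z, w, u; unfold Cmul; simpl; f_equal; ring. Qed.
Lemma Cmul_1r z : Cmul z Cone = z.
Proof. destruct z; unfold Cmul, Cone; simpl; f_equal; ring. Qed.
Lemma Cmul_cancel a w : a <> Czero -> Cmul a w = a -> w = Cone.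
Proof.
destruct a as [a1 a2], w as [w1 w2]; unfold Cmul, Cone, Czero; simpl.
intros ha h; injection h; intros e2 e1.
assert (N : a1 * a1 + a2 * a2 <> 0).
{ intro hN. apply ha.
  assert (q1 : a1 * a1 = 0) by nra. assert (q2 : a2 * a2 = 0) by nra.
  apply Rmult_integral in q1; apply Rmult_integral in q2.
  assert (a1 = 0) by (destruct q1; assumption). assert (a2 = 0) by (destruct q2; assumption).
  subst; reflexivity. }
assert (hu : (a1 * a1 + a2 * a2) * (w1 - 1) = 0).
{ transitivity (a1*(a1*w1-a2*w2 - a1) + a2*(a1*w2+a2*w1 - a2)).
  - ring.
  - rewrite e1 e2; ring. }
assert (hv : (a1 * a1 + a2 * a2) * w2 = 0).
{ transitivity (- a2*(a1*w1-a2*w2 - a1) + a1*(a1*w2+a2*w1 - a2)).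
  - ring.
  - rewrite e1 e2; ring. }
apply Rmult_integral in hu; apply Rmult_integral in hv.
destruct hu as [hu|hu]; [contradiction|]; destruct hv as [hv|hv]; [contradiction|].
f_equal; lra.
Qed.
End CX.

Lemma gather (M : Type) (I : Type) (J : eqType) (U : I -> M -> Prop) (B : J -> M -> Prop) (sJ : seq J) :
  (forall j, exists l, forall x, B j x -> exists i, List.In i l /\ U i x) ->
  exists l, forall j, j \in sJ -> forall x, B j x -> exists i, List.In i l /\ U i x.
Proof.
move=> h; elim: sJ => [|j sJ [l hl]]; first by exists nil.
have [l' hl'] := h j. exists (l' ++ l) => j'; rewrite in_cons => /orP [/eqP->|hj] x hx.
  by have [i [hi hu]] := hl' x hx; exists i; split => //; apply: List.in_or_app; left.
by have [i [hi hu]] := hl j' hj x hx; exists i; split => //; apply: List.in_or_app; right.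
Qed.

Section Comp.
Variable F : padicField.
Local Notation val := (@pf_val F).
Local Notation vg := (vge (@pf_val F)).
Variables (a b : nat) (c : int) (I : Type) (U : I -> 'M[F]_(a, b) -> Prop).
Hypothesis Uopen : forall i, mx_open (U i).
Local Notation M := 'M[F]_(a, b).

Definition Box (t : nat) (x0 : M) := fun y : M => Lat (c + t%:Z) (y - x0).
Definition Cov (B : M -> Prop) (l : list I) := forall x, B x -> exists i, List.In i l /\ U i x.
Definition NC t x0 := forall l, ~ Cov (Box t x0) l.

Definition zt (e : int) : F := proj1_sig (constructive_indefinite_description _ (exists_val F e)).
Lemma ztP e : zt e != 0 /\ val (zt e) = e.
Proof. exact: (proj2_sig (constructive_indefinite_description _ (exists_val F e))). Qed.

Lemma split_box t x0 : NC t x0 -> exists x1, NC t.+1 x1 /\ Lat (c + t%:Z) (x1 - x0).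
Proof.
move=> hnc.
have [s [hs0 hsr]] := pf_residue_finite F.
set z := zt (c + t%:Z). have [hz0 hzv] := ztP (c + t%:Z).
pose child (g : {ffun ('I_a * 'I_b) -> seq_sub s}) : M :=
  x0 + \matrix_(i, j) (z * ssval (g (i, j))).
have hchild : forall g, Lat (c + t%:Z) (child g - x0).
  move=> g i j; rewrite /child addrAC subrr add0r mxE.
  rewrite -[c + t%:Z]addr0. apply: vgeM; first by rewrite -hzv; apply: vge_val.
  by apply: hs0; apply: ssvalP.
have hcov : forall y, Box t x0 y -> exists g, Box t.+1 (child g) y.
  move=> y hy.
  have [g hg] : exists g : ('I_a * 'I_b) -> seq_sub s, forall ij,
      vg 1 ((y - x0) ij.1 ij.2 / z - ssval (g ij)).
    suff H : forall ij : ('I_a * 'I_b)%type, exists r : seq_sub s,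
        vg 1 ((y - x0) ij.1 ij.2 / z - ssval r).
      by have [f hf] := fin_all_exists H; exists f.
    move=> ij.
    have hu : vg 0 ((y - x0) ij.1 ij.2 / z).
      have := hy ij.1 ij.2; rewrite /vge mulf_eq0 invr_eq0 (negbTE hz0) orbF.
      case/orP=> [->//|hv]; case: eqP => [//|/eqP hne] /=.
      rewrite val_div // hzv; lia.
    have [r hr1 hr2] := hsr _ hu. by exists (SeqSub hr1).
  exists (finfun g) => i j. rewrite /child opprD addrA !mxE ffunE.
  have -> : y i j - x0 i j - z * ssval (g (i, j)) = z * ((y - x0) i j / z - ssval (g (i, j))).
    by rewrite mulrBr mulrCA mulfV // mulr1 !mxE.
  apply: (vge_mono (k := (c + t%:Z) + 1)); first lia.
  apply: vgeM; first by rewrite -hzv; apply: vge_val.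
  exact: (hg (i, j)).
have [g hg] : exists g, NC t.+1 (child g).
  apply: NNPP => hno.
  have hall : forall g, exists l, Cov (Box t.+1 (child g)) l.
    move=> g; apply: NNPP => hn; apply: hno; exists g => l hl; apply: hn; by exists l.
  have [l hl] := @gather M I _ U (fun g => Box t.+1 (child g)) (enum {ffun ('I_a * 'I_b) -> seq_sub s}) hall.
  apply: (hnc l) => y hy. have [g hg] := hcov y hy.
  by apply: (hl g) => //; rewrite mem_enum.
by exists (child g); split.
Qed.
End Comp.

Lemma Lat_compact (F : padicField) a b (c : int) : is_compact (@mx_open F a b) (@Lat F a b c).
Proof.
move=> I U Uo hcov.
apply: NNPP => hno.
have NC0 : NC c U 0 0.
  move=> l hl; apply: hno; exists l => x hx; apply: hl.
  rewrite /Box; apply: (Lat_mono (k := c)); [lia | by rewrite subr0].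
have H : forall (t : nat) (x0 : 'M[F]_(a, b)), exists x1,
    (NC c U t x0 -> NC c U t.+1 x1) /\ Lat (c + t%:Z) (x1 - x0).
  move=> t x0. case: (classic (NC c U t x0)) => h.
    by have [x1 [h1 h2]] := split_box h; exists x1.
  by exists x0; split => //; rewrite subrr; apply: Lat0.
pose step t x := proj1_sig (constructive_indefinite_description _ (H t x)).
have stepP : forall t x, (NC c U t x -> NC c U t.+1 (step t x)) /\ Lat (c + t%:Z) (step t x - x).
  by move=> t x; exact: (proj2_sig (constructive_indefinite_description _ (H t x))).
pose fix sq t := match t with 0%N => 0 | t'.+1 => step t' (sq t') end.
have sqNC : forall t, NC c U t (sq t).
  by elim=> [|t IH] //=; apply: (proj1 (stepP t (sq t))).
have sqC : forall i d, Lat (c + i%:Z) (sq (addn i d) - sq i).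
  move=> i; elim=> [|d IH]; first by rewrite addn0 subrr; apply: Lat0.
  rewrite addnS /= -(subrK (sq (addn i d)) (step _ _)) -addrA.
  apply: LatD => //. apply: Lat_mono (proj2 (stepP _ _)). lia.
have sqC' : forall k, exists N, forall i j, (leq N i) -> (leq N j) ->
    Lat k (sq i - sq j).
  move=> k; exists (absz (k - c)) => i j hi hj.
  case: (leqP i j) => hij.
    rewrite -(subnK hij) addnC -opprB; apply: LatN; apply: Lat_mono (sqC _ _). lia.
  have hji := ltnW hij.
  rewrite -(subnK hji) addnC; apply: Lat_mono (sqC _ _). lia.
have [Lf hLf] : exists Lf : ('I_a * 'I_b)%type -> F, forall ij k, exists N, forall i,
    (leq N i) -> vge (@pf_val F) k (sq i ij.1 ij.2 - Lf ij).
  suff HH : forall ij : ('I_a * 'I_b)%type, exists l : F, forall k, exists N, forall i,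
      (leq N i) -> vge (@pf_val F) k (sq i ij.1 ij.2 - l).
    by have [f hf] := fin_all_exists HH; exists f.
  move=> ij. apply: pf_complete => k.
  have [N hN] := sqC' k; exists N => i j hi hj.
  by have := hN i j hi hj ij.1 ij.2; rewrite !mxE.
pose L : 'M[F]_(a, b) := \matrix_(i, j) Lf (i, j).
have hL : forall k, exists N, forall i, (leq N i) -> Lat k (sq i - L).
  move=> k.
  have [N hN] : exists N, forall ij : ('I_a * 'I_b)%type, forall i, (leq N i) ->
      vge (@pf_val F) k (sq i ij.1 ij.2 - Lf ij).
    apply: fin_bound; first by move=> ij; apply: hLf.
    by move=> N N' ij hNN' h i hi; apply: h; apply: leq_trans hi.
  by exists N => i hi p q; rewrite !mxE; apply: (hN (p, q)).
have [N0 hN0] := hL c.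
have LL : Lat c L.
  have e : L = sq N0 - (sq N0 - L) by rewrite opprB addrC subrK.
  rewrite e; apply: LatB; last exact: hN0.
  have := sqC 0%N N0; rewrite add0n /= => hh; apply: (Lat_mono (k := c + 0%:Z)); [lia | by rewrite -[sq N0]subr0].
have [i0 hi0] := hcov L LL.
have [k hk] := Uo i0 L hi0.
have [N1 hN1] := hL k.
set t := maxn N1 (absz (k - c)).
apply: (sqNC t [:: i0]) => y hy; exists i0; split; first by left.
apply: hk => p q.
have -> : y p q - L p q = (y - sq t) p q + (sq t - L) p q by rewrite !mxE addrA subrK.
apply: vgeD.
  apply: vge_mono (hy p q). have := leq_maxr N1 (absz (k - c)). rewrite -/t. lia.
by apply: hN1; apply: leq_maxl.
Qed.

Lemma image_compact (F : padicField) a b c (G : tdlcGroup) (h : 'M[F]_(a, b) -> G) :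
  (forall V, tg_open V -> mx_open (fun x => V (h x))) ->
  is_compact (@tg_open G) (fun g => exists x, Lat c x /\ g = h x).
Proof.
move=> hc I U Uo hcov.
have [l hl] := @Lat_compact F a b c I (fun i x => U i (h x)) (fun i => hc _ (Uo i))
  (fun x hx => hcov (h x) (ex_intro _ x (conj hx erefl))).
exists l => g [x [hx ->]]; exact: hl.
Qed.

Lemma cont_open (F : padicField) (G : tdlcGroup) a b (phi : 'M[F]_(a, b) -> G) :
  continuous_on (@mx_open F a b) (fun _ => True) (@tg_open G) phi ->
  forall V, tg_open V -> mx_open (fun x => V (phi x)).
Proof.
move=> hc V hV x hx. have [W [hW hWV]] := hc V hV.
have [k hk] := hW x (proj2 (hWV x I) hx).
exists k => y hy; apply/(hWV y I); exact: hk.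
Qed.

Lemma mx_open_trans (F : padicField) a b (U : 'M[F]_(a, b) -> Prop) x0 :
  mx_open U -> mx_open (fun x => U (x0 + x)).
Proof.
move=> hU x hx. have [k hk] := hU _ hx. exists k => y hy; apply: hk => i j.
by rewrite !mxE opprD addrACA subrr add0r; have := hy i j.
Qed.

Lemma tg_idem (G : tdlcGroup) (x : G) : tg_mul x x = x -> x = tg_one G.
Proof.
move=> h. have e := tg_mulA (tg_inv x) x x. rewrite h tg_mulVg tg_mul1g in e.
exact: esym e.
Qed.

Lemma small_lattice (F : padicField) (G : tdlcGroup) n (phi : 'rV[F]_n -> G) (K : G -> Prop) :
  (forall x y, phi (x + y) = tg_mul (phi x) (phi y)) ->
  continuous_on (@mx_open F 1 n) (fun _ => True) (@tg_open G) phi ->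
  tg_open K -> K (tg_one G) -> exists j, forall y, Lat j y -> K (phi y).
Proof.
move=> hom hc hK h1.
have e : phi 0 = tg_one G by apply: tg_idem; rewrite -hom addr0.
have h0 : K (phi 0) by rewrite e.
have [k hk] := cont_open hc hK h0.
by exists k => y hy; apply: hk => i j; rewrite mxE subr0; apply: hy.
Qed.

Lemma psi0 (F : padicField) (psi : F -> Cx) : additive_character psi -> psi 0 = Cone.
Proof.
move=> [hadd [hnz _]]. apply: (Cmul_cancel (hnz 0)). by rewrite -hadd addr0.
Qed.

Lemma psi_bound (F : padicField) (psi : F -> Cx) : additive_character psi ->
  (exists x, psi x <> Cone) ->
  exists c0, forall (j : int) z, (forall w, vge (@pf_val F) j w -> psi (z * w) = Cone) ->
    vge (@pf_val F) (c0 - j) z.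
Proof.
move=> hpsi [x0 hx0].
have hx00 : x0 != 0 by apply/eqP => e; apply: hx0; rewrite e psi0.
exists (pf_val x0 + 1) => j z h.
rewrite /vge; case: (z =P 0) => [//|/eqP hz] /=.
apply: NNPP => hn. apply: hx0.
have hw : vge (@pf_val F) j (x0 / z).
  rewrite /vge val_div // orbC; apply/orP; left. move/negP: hn. lia.
by have := h _ hw; rewrite mulrC divfK.
Qed.

Lemma row_bound (F : padicField) (psi : F -> Cx) c0 n (j : int) (u : 'rV[F]_n) :
  (forall (j : int) z, (forall w, vge (@pf_val F) j w -> psi (z * w) = Cone) ->
    vge (@pf_val F) (c0 - j) z) ->
  (forall y : 'rV[F]_n, Lat j y -> psi ((u *m y^T) 0 0) = Cone) -> Lat (c0 - j) u.
Proof.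
move=> hb h i0 k. rewrite (ord1 i0). apply: hb => w hw.
pose y : 'rV[F]_n := \row_l (if l == k then w else 0).
have hy : Lat j y.
  move=> p q; rewrite mxE; case: (q == k) => //; exact: vge0.
have := h y hy. rewrite mxE (bigD1 k) //= big1 ?addr0.
  by rewrite !mxE eqxx.
by move=> l hl; rewrite !mxE (negbTE hl) mulr0.
Qed.

Lemma perturb (F : padicField) m n (A A' : 'M[F]_(m, n)) (B : 'M[F]_(n, m)) (w a : int)
  (x : 'rV[F]_m) :
  A *m B = 1%:M -> Lat w B -> Lat (1 - w) (A' - A) -> Lat a (x *m A') -> Lat (a + w) x.
Proof.
move=> hAB hB hA hx.
have ex : x = (x *m A') *m B - (x *m (A' - A)) *m B.
  by rewrite -mulmxBl -mulmxBr opprB addrC subrK -mulmxA hAB mulmx1.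
have [b hb] := Lat_exists x.
suff: forall k : nat, forall b, a + w - b <= k%:Z -> Lat b x -> Lat (a + w) x.
  move=> H. pose d : int := a + w - b. apply: (H (absz d) b _ hb). rewrite /d. lia.
elim=> [|k IH] b' hk hb'.
  by apply: Lat_mono hb'; lia.
case: (lerP (a + w) b') => hle; first by apply: Lat_mono hb'.
apply: (IH (b' + 1)); first lia.
rewrite ex; apply: LatB.
  by apply: Lat_mono (LatM hx hB); lia.
apply: Lat_mono (LatM (LatM (Lat_mono _ hb') hA) hB). 2: apply: lexx. lia.
Qed.

Lemma nondeg_inv (F : padicField) m n (A : 'M[F]_(m, n)) :
  nondegenerate_pairing A -> exists B, A *m B = 1%:M.
Proof.
move=> [h1 _]. apply/row_freeP. rewrite -kermx_eq0. apply/eqP/row_matrixP => i.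
rewrite row0. apply: h1 => y. rewrite /pairing.
by have /sub_kermxP -> := row_sub i (kermx A); rewrite mul0mx mxE.
Qed.

Lemma key_eq (F : padicField) (G : tdlcGroup) m n (phiC : 'rV[F]_m -> G) (phiD : 'rV[F]_n -> G)
  A psi chi f (K : G -> Prop) x y :
  right_invariant K f -> equivariant phiC phiD A psi chi f -> K (phiD y) ->
  f (phiC x) <> Czero -> Cmul (chi (phiD y)) (psi (pairing A x y)) = Cone.
Proof.
move=> hK heq hy hf. apply: (Cmul_cancel hf).
by rewrite Cmul_assoc -heq hK.
Qed.

Lemma pairingD (F : padicField) m n (A : 'M[F]_(m, n)) x1 x2 y :
  pairing A (x1 + x2) y = pairing A x1 y + pairing A x2 y.
Proof. by rewrite /pairing !mulmxDl mxE. Qed.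

Lemma foldr_min_le (T : Type) (l : list (T * int)) p :
  List.In p l -> foldr (fun q acc => Num.min q.2 acc) 0 l <= p.2.
Proof.
elim: l => [//|q l IH] /= [->|h]; rewrite ge_min; first by rewrite lexx.
by rewrite IH ?orbT.
Qed.

Close Scope ring_scope.

Theorem mainTheorem6
  (F : padicField) (psi : F -> Cx)
  (Hpsi : additive_character psi) (Hpsi_nontriv : exists x, psi x <> Cone)
  (G0 : tdlcGroup) (m n : nat) (C D : G0 -> Prop)
  (phiC : 'rV[F]_m -> G0) (phiD : 'rV[F]_n -> G0)
  (HC : closed_subgroup C) (HD : closed_subgroup D)
  (HphiC : topgroup_iso_onto phiC C) (HphiD : topgroup_iso_onto phiD D) :
  (forall (A : 'M[F]_(m, n)) (chi : G0 -> Cx) (f : G0 -> Cx),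
      nondegenerate_pairing A ->
      continuous_character D chi ->
      (exists K, open_compact_subgroup K /\ right_invariant K f) ->
      equivariant phiC phiD A psi chi f ->
      exists S, is_compact (@tg_open G0) S /\
        forall c, C c -> f c <> Czero -> S c)
  /\
  (forall (K0 : G0 -> Prop) (Omega : 'M[F]_(m, n) -> Prop) (k : int),
      open_compact_subgroup K0 ->
      is_compact (@mx_open F m n) Omega ->
      (forall A, Omega A -> nondegenerate_pairing A) ->
      exists S, is_compact (@tg_open G0) S /\
        forall (A : 'M[F]_(m, n)) (chi : G0 -> Cx) (f : G0 -> Cx),
          Omega A ->
          continuous_character D chi ->
          conductor_le phiD chi k ->
          right_invariant K0 f ->
          equivariant phiC phiD A psi chi f ->
          forall c, C c -> f c <> Czero -> S c).
Proof.
Open Scope ring_scope.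
have [homC [_ [HCi [contC _]]]] := HphiC.
have [homD [_ [_ [contD _]]]] := HphiD.
have [c0 hc0] := psi_bound Hpsi Hpsi_nontriv.
have hadd := proj1 Hpsi.
split.
- move=> A chi f hnd _ [K [[[hK1 _] [hKo _]] hfK]] heq.
  have [j0 hj0] := small_lattice homD contD hKo hK1.
  have [B hAB] := nondeg_inv hnd. have [w hw] := Lat_exists B.
  case: (classic (exists x2, f (phiC x2) <> Czero)) => [[x2 hx2]|hno]; last first.
    exists (fun _ => False); split; first by move=> I U _ _; exists nil.
    move=> c hc hfc; apply: hno. have [x ex] := proj1 (HCi c) hc. by exists x; rewrite -ex.
  exists (fun g => exists z, Lat (c0 - j0 + w) z /\ g = phiC (x2 + z)); split.
    apply: (@image_compact F 1 m (c0 - j0 + w) G0 (fun z => phiC (x2 + z))) => V hV /=.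
    exact: (mx_open_trans (x0 := x2) (cont_open contC hV)).
  move=> c hc hfc. have [x1 ex1] := proj1 (HCi c) hc. subst c.
  exists (x1 - x2); split; last by rewrite addrC subrK.
  apply: (perturb (A := A) (A' := A) hAB hw); first by rewrite subrr; apply: Lat0.
  apply: row_bound hc0 _ => y hy.
  have hK : K (phiD y) by apply: hj0.
  have e1 := key_eq (x := x1) hfK heq hK hfc.
  have e2 := key_eq (x := x2) hfK heq hK hx2.
  have e3 : pairing A x1 y = ((x1 - x2) *m A *m y^T) 0 0 + pairing A x2 y.
    by rewrite -pairingD subrK.
  rewrite e3 hadd in e1.
  set g := chi (phiD y) in e1 e2 *. set pz := psi _ in e1 *. set p2 := psi (pairing A x2 y) in e1 e2.
  have : Cmul pz (Cmul g p2) = Cmul g (Cmul pz p2) by rewrite Cmul_assoc (Cmul_comm pz g) -Cmul_assoc.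
  by rewrite e2 Cmul_1r e1.
- move=> K0 Omega k [[hK1 _] [hKo _]] hOm hnd.
  have [j0 hj0] := small_lattice homD contD hKo hK1.
  pose j : int := (absz j0 + absz k)%:Z.
  pose U := fun (p : ('M[F]_(m, n) * int)%type) (X : 'M[F]_(m, n)) =>
    Omega p.1 /\ (exists B, p.1 *m B = 1%:M /\ Lat p.2 B) /\ Lat (1 - p.2) (X - p.1).
  have hUo : forall p, mx_open (U p).
    move=> p X [h1 [h2 h3]]. exists (1 - p.2) => Y hY; split => //; split => //.
    have -> : Y - p.1 = (Y - X) + (X - p.1) by rewrite addrA subrK.
    by apply: LatD => // p' q'; rewrite !mxE; apply: hY.
  have hUc : forall A, Omega A -> exists p, U p A.
    move=> A hA. have [B hAB] := nondeg_inv (hnd A hA). have [w hw] := Lat_exists B.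
    exists (A, w); split => //; split; first by exists B.
    by rewrite subrr; apply: Lat0.
  have [l hl] := hOm _ U hUo hUc.
  pose wmin := foldr (fun q acc => Num.min q.2 acc) 0 l.
  exists (fun g => exists z, Lat (c0 - j + wmin) z /\ g = phiC z); split.
    by apply: image_compact; apply: cont_open contC.
  move=> A chi f hA _ hcond hfK heq c hc hfc.
  have [x ex] := proj1 (HCi c) hc. subst c. exists x; split => //.
  have [p [hp [_ [[B [hAB hB]] hAp]]]] := hl A hA.
  apply: (Lat_mono (k := c0 - j + p.2)); first by have := foldr_min_le hp; rewrite -/wmin; lia.
  apply: (perturb hAB hB hAp).
  apply: row_bound hc0 _ => y hy.
  have hK : K0 (phiD y) by apply: hj0; apply: Lat_mono hy; rewrite /j; lia.
  have hchi : chi (phiD y) = Cone.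
    by apply: hcond => i; apply: (vge_mono (k := j)); [rewrite /j; lia | apply: hy].
  have := key_eq (x := x) hfK heq hK hfc. by rewrite hchi Cmul_comm Cmul_1r.
Qed.
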